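(* Let $K$ be a field and let $A$ be a finitely generated $K$-algebra of finite GK dimension, and let $V$ be a finite-dimensional $K$-subspace of $A$ that contains $1$ and generates $A$ as a $K$-algebra. Then there is a constant $C>0$ such that $$\dim_K(V^n)\;>\;C\,n\,\dim_K(V^{n+1}/V^n)$$ for infinitely many positive integers $n$.
   Context: $V^n$ denotes the $K$-linear span of all products of $n$ elements of $V$; since $1\in V$, $V^n\subseteq V^{n+1}$. $\mathrm{GKdim}(A)=\limsup_{n\to\infty}\log\dim_K(V^n)/\log n$. *)

(* Defs.v *)
From HB Require Import structures.
From Stdlib Require Import ClassicalEpsilon.
From mathcomp Require Import all_boot all_order all_algebra.
From mathcomp Require Import all_classical all_reals all_analysis.
Set Implicit Arguments. Unset Strict Implicit. Unset Printing Implicit Defensive.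
Import Order.TTheory GRing.Theory Num.Theory.
Local Open Scope ring_scope.

Section GK.
Variables (K : fieldType) (A : algType K).

Definition lincomb (s : seq A) (c : 'I_(size s) -> K) : A :=
  \sum_(i < size s) c i *: s`_i.

Definition kspan (S : A -> Prop) : A -> Prop :=
  fun x => exists (s : seq A) (c : 'I_(size s) -> K),
    (forall y, y \in s -> S y) /\ x = lincomb c.

Definition kfree (s : seq A) : Prop :=
  forall c : 'I_(size s) -> K, lincomb c = 0 -> forall i, c i = 0.

Definition has_dim (S : A -> Prop) (d : nat) : Prop :=
  exists s : seq A, [/\ size s = d, kfree s, (forall y, y \in s -> S y)
    & forall x, S x -> kspan (fun y => y \in s) x].

(* dim_K S (meaningful when S is a finite-dimensional subspace; 0 otherwise) *)
Definition kdim (S : A -> Prop) : nat :=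
  ClassicalEpsilon.epsilon (inhabits 0%N) (has_dim S).

Fixpoint prods (V : A -> Prop) (n : nat) : A -> Prop :=
  match n with
  | 0 => fun x => x = 1
  | n.+1 => fun x => exists v w, [/\ V v, prods V n w & x = v * w]
  end.

Definition Vpow (V : A -> Prop) (n : nat) : A -> Prop := kspan (prods V n).

Definition ksubspace (V : A -> Prop) : Prop :=
  [/\ V 0, forall x y, V x -> V y -> V (x + y) & forall (a : K) x, V x -> V (a *: x)].

Definition kfindim_subspace (V : A -> Prop) : Prop :=
  ksubspace V /\ exists d, has_dim V d.

Definition ksubalg (B : A -> Prop) : Prop :=
  [/\ ksubspace B, B 1 & forall x y, B x -> B y -> B (x * y)].

Definition kgenerates (V : A -> Prop) : Prop :=
  forall B, ksubalg B -> (forall v, V v -> B v) -> forall x, B x.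

Definition GKdim_wrt (R : realType) (V : A -> Prop) : \bar R :=
  limn_esup (fun n : nat =>
    ((ln (kdim (Vpow V n))%:R / ln n%:R : R)%:E)).
End GK.

(* Main.v *)
Require Import Defs.
From HB Require Import structures.
From Stdlib Require Import ClassicalEpsilon.
From mathcomp Require Import all_boot all_order all_algebra.
From mathcomp Require Import all_classical all_reals all_analysis.
Import Order.TTheory GRing.Theory Num.Theory.
Local Open Scope ring_scope.
Set Implicit Arguments. Unset Strict Implicit. Unset Printing Implicit Defensive.

Definition span_list {K : fieldType} {A : algType K} (l : seq A) (x : A) : Prop :=
  exists c : 'I_(size l) -> K, x = lincomb c.

Lemma lincomb_closed {K : fieldType} {A : algType K} (W : A -> Prop) :
  W 0 -> (forall x y, W x -> W y -> W (x + y)) -> (forall (a : K) x, W x -> W (a *: x)) ->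
  forall (s : seq A) (c : 'I_(size s) -> K), (forall y, y \in s -> W y) -> W (lincomb c).
Proof.
move=> W0 WD WZ s c Hs; rewrite /lincomb; apply: (big_ind W) => // i _.
by apply: WZ; apply: Hs; exact: mem_nth.
Qed.

Lemma span_list0 {K : fieldType} {A : algType K} (l : seq A) : span_list l 0.
Proof. by exists (fun _ => 0); rewrite /lincomb big1 // => i _; rewrite scale0r. Qed.

Lemma span_listD {K : fieldType} {A : algType K} (l : seq A) x y :
  span_list l x -> span_list l y -> span_list l (x + y).
Proof.
move=> [c1 ->] [c2 ->]; exists (fun i => c1 i + c2 i).
by rewrite /lincomb -big_split; apply: eq_bigr => i _; rewrite scalerDl.
Qed.

Lemma span_listZ {K : fieldType} {A : algType K} (l : seq A) (a : K) x :
  span_list l x -> span_list l (a *: x).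
Proof.
move=> [c ->]; exists (fun i => a * c i).
by rewrite /lincomb scaler_sumr; apply: eq_bigr => i _; rewrite scalerA.
Qed.

Lemma span_list_closed {K : fieldType} {A : algType K} (l s : seq A) (c : 'I_(size s) -> K) :
  (forall y, y \in s -> span_list l y) -> span_list l (lincomb c).
Proof.
apply: lincomb_closed; [exact: span_list0|exact: span_listD|exact: span_listZ].
Qed.

Lemma span_list_mem {K : fieldType} {A : algType K} (l : seq A) y :
  y \in l -> span_list l y.
Proof.
move=> yl; exists (fun i => if val i == index y l then 1 else 0).
have il : (index y l < size l)%N by rewrite index_mem.
rewrite /lincomb (bigD1 (Ordinal il)) //= eqxx scale1r nth_index // big1 ?addr0 //.
move=> i ne; rewrite ifF ?scale0r //; apply/negbTE; apply: contra ne => /eqP e.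
by apply/eqP/val_inj.
Qed.

Lemma kfree_cons {K : fieldType} {A : algType K} (x : A) (b : seq A) :
  kfree b -> ~ span_list b x -> kfree (x :: b).
Proof.
move=> fb nx c Hc.
have E : lincomb c = c ord0 *: x + \sum_(i < size b) c (lift ord0 i) *: b`_i.
  by rewrite /lincomb big_ord_recl.
have c0 : c ord0 = 0.
  apply: contrapT => nz; apply: nx.
  exists (fun i => - (c ord0)^-1 * c (lift ord0 i)).
  have e1 : c ord0 *: x = - \sum_(i < size b) c (lift ord0 i) *: b`_i.
    by apply/eqP; rewrite -subr_eq0 opprK -E Hc.
  have -> : x = (c ord0)^-1 *: (c ord0 *: x) by rewrite scalerA mulVf ?scale1r //; apply/eqP.
  rewrite e1 scalerN -scaleNr scaler_sumr /lincomb; apply: eq_bigr => i _.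
  by rewrite scalerA.
have cr : forall i, c (lift ord0 i) = 0.
  apply: fb; rewrite /lincomb.
  by move: Hc; rewrite E c0 scale0r add0r.
move=> i; case: (unliftP ord0 i) => [j ->|->] //; exact: cr.
Qed.

Lemma extract {K : fieldType} {A : algType K} (l : seq A) :
  exists b : seq A, [/\ {subset b <= l}, kfree b & forall y, y \in l -> span_list b y].
Proof.
elim: l => [|x l [b [sb fb hb]]].
  by exists [::]; split => // c _ [].
case: (pselect (span_list b x)) => hx.
  exists b; split => //.
    by move=> y yb; rewrite in_cons (sb _ yb) orbT.
  by move=> y; rewrite in_cons => /orP [/eqP -> | yl] //; exact: hb.
exists (x :: b); split.
- by move=> y; rewrite !in_cons => /orP [->|/sb ->] //; rewrite orbT.
- exact: kfree_cons.
- move=> y; rewrite in_cons => /orP [/eqP -> | yl]; first by apply: span_list_mem; rewrite mem_head.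
  have [c ->] := hb y yl; apply: span_list_closed => z zb.
  by apply: span_list_mem; rewrite in_cons zb orbT.
Qed.

Fixpoint Lprod {K : fieldType} {A : algType K} (bV : seq A) (n : nat) : seq A :=
  match n with
  | 0 => [:: 1]
  | n.+1 => [seq a * c | a <- bV, c <- Lprod bV n]
  end.

Lemma Lprod_prods {K : fieldType} {A : algType K} (V : A -> Prop) (bV : seq A) :
  (forall a, a \in bV -> V a) -> forall n y, y \in Lprod bV n -> prods V n y.
Proof.
move=> HV; elim=> [|n IH] y /=; first by rewrite inE => /eqP.
by move/allpairsP => [[a c] [ha hc ->]] /=; exists a, c; split => //; [exact: HV|exact: IH].
Qed.

Lemma mul_span {K : fieldType} {A : algType K} (l1 l2 : seq A) x y :
  span_list l1 x -> span_list l2 y ->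
  span_list [seq a * c | a <- l1, c <- l2] (x * y).
Proof.
move=> [c1 ->] hy.
apply: (lincomb_closed (W := fun x => span_list [seq a * c | a <- l1, c <- l2] (x * y))).
- by rewrite mul0r; exact: span_list0.
- by move=> u v hu hv; rewrite mulrDl; exact: span_listD.
- by move=> a u hu; rewrite -scalerAl; exact: span_listZ.
move=> a al; case: hy => c2 ->.
apply: (lincomb_closed (W := fun y => span_list [seq a * c | a <- l1, c <- l2] (a * y))).
- by rewrite mulr0; exact: span_list0.
- by move=> u v hu hv; rewrite mulrDr; exact: span_listD.
- by move=> b u hu; rewrite -scalerAr; exact: span_listZ.
by move=> z zl; apply: span_list_mem; apply: allpairs_f.
Qed.

Lemma prods_span {K : fieldType} {A : algType K} (V : A -> Prop) (bV : seq A) :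
  (forall x, V x -> span_list bV x) -> forall n y, prods V n y -> span_list (Lprod bV n) y.
Proof.
move=> HV; elim=> [|n IH] y /=; first by move=> ->; apply: span_list_mem; rewrite mem_head.
by move=> [v [w [Vv Pw ->]]]; apply: mul_span; [exact: HV|exact: IH].
Qed.

Lemma one_prods {K : fieldType} {A : algType K} (V : A -> Prop) :
  V 1 -> forall n, prods V n 1.
Proof. by move=> V1; elim=> [|n IH] //=; exists 1, 1; rewrite mulr1. Qed.

Lemma in_Vpow {K : fieldType} {A : algType K} (V : A -> Prop) n y :
  prods V n y -> Vpow V n y.
Proof.
move=> Py; exists [:: y], (fun _ => 1); split.
  by move=> z; rewrite inE => /eqP ->.
by rewrite /lincomb big_ord_recl big_ord0 /= scale1r addr0.
Qed.

Lemma Vpow_has_dim {K : fieldType} {A : algType K} (V : A -> Prop) n :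
  kfindim_subspace V -> exists d, has_dim (Vpow V n) d.
Proof.
move=> [_ [dV [bV [_ _ HbV HspV]]]].
have HV : forall x, V x -> span_list bV x.
  move=> x /HspV [s [c [hs ->]]]; apply: span_list_closed => y ys.
  by apply: span_list_mem; apply: hs.
have [b [sb fb hb]] := extract (Lprod bV n).
exists (size b), b; split => //.
  by move=> y yb; apply: in_Vpow; apply: (Lprod_prods HbV); apply: sb.
move=> x [s [c [hs ->]]].
have : span_list b (lincomb c).
  apply: span_list_closed => y ys.
  have [c' ->] := prods_span HV (hs y ys).
  by apply: span_list_closed => z zl; apply: hb.
by move=> [c' ->]; exists b, c'.
Qed.

Lemma kdim_pos {K : fieldType} {A : algType K} (V : A -> Prop) n :
  kfindim_subspace V -> V 1 -> (0 < kdim (Vpow V n))%N.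
Proof.
move=> HV V1.
have hd : has_dim (Vpow V n) (kdim (Vpow V n)).
  by rewrite /kdim; apply: epsilon_spec; exact: Vpow_has_dim.
case: hd => s [ss _ _ hsp].
have [s' [c [hs' E]]] := hsp 1 (in_Vpow (one_prods V1 n)).
rewrite lt0n; apply/negP => /eqP k0.
move: ss; rewrite k0 => /size0nil sn.
case: s' c hs' E => [|y s'] c hs' E.
  by move: E; rewrite /lincomb big_ord0; apply/eqP; exact: oner_neq0.
by have := hs' y (mem_head _ _); rewrite sn in_nil.
Qed.
From mathcomp Require Import lra zify.
From Stdlib Require Import Lia.
Definition rprod (k n : nat) : nat := (\prod_(i < k) (n + i))%N.

Lemma rprodS k n : (rprod k n.+1 * n = rprod k n * (n + k))%N.
Proof.
rewrite /rprod.
have E : (\prod_(i < k.+1) (n + i) = (\prod_(i < k) (n + i.+1)) * n)%N.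
  by rewrite big_ord_recl /= addn0 mulnC.
have E2 : (\prod_(i < k.+1) (n + i) = (\prod_(i < k) (n + i)) * (n + k))%N.
  by rewrite big_ord_recr.
rewrite -E2 E; congr (_ * _)%N; apply: eq_bigr => i _; by rewrite addnS addSn.
Qed.

Lemma rprod_ge k n : (n ^ k <= rprod k n)%N.
Proof.
rewrite /rprod; elim: k => [|k IH]; first by rewrite big_ord0.
by rewrite big_ord_recr /= expnSr leq_mul // leq_addr.
Qed.

Lemma growth (d : nat -> nat) k N1 : (0 < N1)%N ->
  (forall n, (N1 <= n)%N -> ((n + k) * d n <= n * d n.+1)%N) ->
  forall n, (N1 <= n)%N -> (d N1 * rprod k n <= d n * rprod k N1)%N.
Proof.
move=> N1pos H; elim=> [|n IH]; first by rewrite leqn0 => /eqP E; move: N1pos; rewrite E.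
rewrite leq_eqVlt => /orP [/eqP <- //| ]; rewrite ltnS => N1n.
have IH' := IH N1n; have Hn := H n N1n.
have npos : (0 < n)%N by apply: leq_trans N1n.
rewrite -(leq_pmul2r npos) -mulnA rprodS.
have HS := rprodS k n.

nia.
Qed.

Lemma nat_contra (d : nat -> nat) M N0 N1 : (0 < N1)%N -> (forall n, (0 < d n)%N) ->
  (forall n, (N0 <= n)%N -> (d n <= n ^ M)%N) ->
  (forall n, (N1 <= n)%N -> ((n + M.+2) * d n <= n * d n.+1)%N) -> False.
Proof.
move=> N1pos dpos Hb Hg.
set n := (maxn N0 N1 + rprod M.+2 N1).+1.
have nN0 : (N0 <= n)%N by rewrite /n; lia.
have nN1 : (N1 <= n)%N by rewrite /n; lia.
have nP : (rprod M.+2 N1 < n)%N by rewrite /n; lia.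
have G := @growth d M.+2 N1 N1pos Hg n nN1.
have B := Hb n nN0.
have R1 := rprod_ge M.+2 n.
have dN1 := dpos N1.
have npos : (0 < n)%N by [].
have : (n ^ M * n ^ 2 <= n ^ M * rprod M.+2 N1)%N.
  rewrite -expnD addn2.
  apply: (leq_trans R1).
  apply: (leq_trans (leq_pmull _ dN1)).
  apply: (leq_trans G).
  by rewrite leq_mul2r B orbT.
rewrite leq_pmul2l ?expn_gt0 ?npos // => h.
have : (n <= n ^ 2)%N by rewrite expnS leq_pmulr // expn_gt0 npos.
move=> h2; have := leq_trans h2 h; rewrite leqNgt nP //.
Qed.
Lemma bound_from_gk (R : realType) (d : nat -> nat) :
  (forall n, (0 < d n)%N) ->
  (limn_esup (fun n => ((ln (d n)%:R / ln n%:R : R)%:E)) < +oo)%E ->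
  exists M N0, forall n, (N0 <= n)%N -> (d n <= n ^ M)%N.
Proof.
move=> dpos; rewrite /limn_esup /limf_esup => /ereal_inf_lt [_ [V FV <-]] Vlt.
case: FV => r _ rV.
have [B HB] : exists B : R, forall n, (r <= n)%N -> ln (d n)%:R / ln n%:R <= B.
  move: Vlt; case E: (ereal_sup _) => [y| |] // _.
  - exists y => n rn; rewrite -lee_fin -E; apply: ereal_sup_ubound.
    by exists n => //; apply: rV.
  - exists 0 => n rn.
    have : (((ln (d n)%:R / ln n%:R : R))%:E <= -oo)%E.
      by rewrite -E; apply: ereal_sup_ubound; exists n => //; apply: rV.
    by [].
exists (Num.truncn B).+1, (maxn r 2) => n; rewrite geq_max => /andP [rn n2].
have lnpos : 0 < ln (n%:R : R) by apply: ln_gt0; rewrite ltr1n.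
have := HB n rn; rewrite ler_pdivrMr // => H.
rewrite -(ler_nat R) natrX -ler_ln ?posrE ?ltr0n ?dpos //; last first.
  by apply: exprn_gt0; rewrite ltr0n (leq_trans _ n2).
rewrite lnXn ?ltr0n ?(leq_trans _ n2) // -[X in _ <= X]mulr_natr.
apply: le_trans H _; rewrite mulrC; apply: ler_wpM2l; first exact: ltW.
exact: ltW (truncnS_gt B).
Qed.

Lemma analytic (R : realType) (d : nat -> nat) : (forall n, (0 < d n)%N) ->
  (limn_esup (fun n => ((ln (d n)%:R / ln n%:R : R)%:E)) < +oo)%E ->
  exists C : R, 0 < C /\ forall N : nat, exists n : nat, (N < n)%N /\
    (d n)%:R > C * n%:R * ((d n.+1)%:R - (d n)%:R).
Proof.
move=> dpos gk; have [M [N0 Hb]] := @bound_from_gk R d dpos gk.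
exists (M.+2%:R)^-1; split; first by rewrite invr_gt0 ltr0n.
move=> N; apply: contrapT => H.
apply: (@nat_contra d M N0 N.+1) => // n Nn.
have : ~ ((d n)%:R > (M.+2%:R)^-1 * n%:R * ((d n.+1)%:R - (d n)%:R) :> R).
  by move=> h; apply: H; exists n.
move/negP; rewrite -leNgt => h.
have h2 := ler_wpM2l (ler0n R M.+2) h.
rewrite !mulrA mulfV ?pnatr_eq0 // mul1r in h2.
rewrite -(ler_nat R) !natrM natrD.
nra.
Qed.

Theorem lemma2p4 (R : realType) (K : fieldType) (A : algType K) (V : A -> Prop) :
  kfindim_subspace V -> V 1 -> kgenerates V ->
  (GKdim_wrt R V < +oo)%E ->
  exists C : R, 0 < C /\
    forall N : nat, exists n : nat, (N < n)%N /\
      (kdim (Vpow V n))%:R >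
        C * n%:R * ((kdim (Vpow V n.+1))%:R - (kdim (Vpow V n))%:R).
Proof.
move=> HV V1 _ gk.
exact: (@analytic R (fun n => kdim (Vpow V n)) (fun n => kdim_pos n HV V1) gk).
Qed.
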